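(* Let $f$ be an axis rule defined for profiles over every finite candidate set, satisfying resistance to cloning, and suppose there are constants $h^*_m,h_m>0$ ($m\ge3$) such that for every finite $C$ with $|C|=m$, $f$ restricted to profiles over $C$ is the scoring rule with $\mathrm{cost}(A,\triangleleft)=0$ if $A$ is an interval of $\triangleleft$, $\mathrm{cost}(A,\triangleleft)=h^*_m$ if $A$ is not an interval of $\triangleleft$ and contains both the leftmost and rightmost candidate of $\triangleleft$, and $\mathrm{cost}(A,\triangleleft)=h_m$ otherwise. Then $h^*_m\le h_m$ for all $m\ge4$.
   Context: Candidates come from a fixed infinite universe. An approval ballot is a nonempty subset $A\subseteq C$; a profile over $C$ is a finite sequence of ballots. An axis is a strict linear order $\triangleleft$ on $C$. A ballot $A$ is an interval of $\triangleleft$ if for all $a,b\in A$ and every $c$ with $a\triangleleft c\triangleleft b$ we have $c\in A$. The scoring rule with cost $\mathrm{cost}$ returns $\arg\min_{\triangleleft}\sum_{A\in P}\mathrm{cost}(A,\triangleleft)$. Two candidates $a,a'$ are clones in $P$ if for every $A\in P$, $a\in A$ iff $a'\in A$. $P_{-c}$ is the profile over $C\setminus\{c\}$ obtained by removing $c$ from every ballot (ballots becoming empty are discarded); $\triangleleft_{-c}$ is the restriction of $\triangleleft$ to $C\setminus\{c\}$. Resistance to cloning: for every profile $P$ with clones $a,a'$, (1) for every $\triangleleft\in f(P)$, $\triangleleft_{-a}\in f(P_{-a})$, and (2) for every $\triangleleft^*\in f(P_{-a})$ there is $\triangleleft\in f(P)$ with $\triangleleft_{-a}=\triangleleft^*$.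 *)

(* Defs.v *)
From HB Require Import structures.
From mathcomp Require Import all_boot all_order all_algebra.
From mathcomp Require Import finmap.
Set Implicit Arguments. Unset Strict Implicit. Unset Printing Implicit Defensive.
Import Order.TTheory GRing.Theory Num.Theory.
Local Open Scope fset_scope.
Local Open Scope ring_scope.

Section Axes.
Variable U : choiceType.

Definition is_profile (C : {fset U}) (P : seq {fset U}) : Prop :=
  forall A, A \in P -> (A != fset0) && (A `<=` C).

(* An axis on C (a strict linear order on C) is represented by the
   duplicate-free sequence listing C from left to right. *)
Definition is_axis (C : {fset U}) (ax : seq U) : Prop :=
  uniq ax /\ (forall x, (x \in ax) = (x \in C)).

Definition axlt (ax : seq U) (a b : U) : bool := (index a ax < index b ax)%N.

Definition is_interval (A : {fset U}) (ax : seq U) : bool :=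
  [forall a : A, forall b : A, all (fun c => (axlt ax (val a) c && axlt ax c (val b)) ==> (c \in A)) ax].

Definition has_both_ends (A : {fset U}) (ax : seq U) : bool :=
  if ax is x :: s then (x \in A) && (last x s \in A) else false.

Definition ax_remove (ax : seq U) (c : U) : seq U := filter (predC1 c) ax.

Definition prof_remove (P : seq {fset U}) (c : U) : seq {fset U} :=
  filter (fun A => A != fset0) (map (fun A => A `\ c) P).

Definition clones (P : seq {fset U}) (a a' : U) : Prop :=
  forall A, A \in P -> (a \in A) = (a' \in A).

(* An axis rule: for each finite candidate set C and profile P over C,
   the set f C P of axes on C it outputs. *)
Definition axis_rule (f : {fset U} -> seq {fset U} -> seq U -> Prop) : Prop :=
  forall C P ax, is_profile C P -> f C P ax -> is_axis C ax.

Definition resistant_to_cloning (f : {fset U} -> seq {fset U} -> seq U -> Prop) : Prop :=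
  forall (C : {fset U}) (P : seq {fset U}) (a a' : U),
    is_profile C P -> a \in C -> a' \in C -> a != a' -> clones P a a' ->
    (forall ax, f C P ax -> f (C `\ a) (prof_remove P a) (ax_remove ax a)) /\
    (forall axs, f (C `\ a) (prof_remove P a) axs ->
       exists2 ax, f C P ax & ax_remove ax a = axs).

Variable R : realFieldType.

Definition cost3 (hstar h : R) (A : {fset U}) (ax : seq U) : R :=
  if is_interval A ax then 0
  else if has_both_ends A ax then hstar else h.

Definition total_cost (hstar h : R) (P : seq {fset U}) (ax : seq U) : R :=
  \sum_(A <- P) cost3 hstar h A ax.

Definition scoring_rule (hstar h : R) (C : {fset U}) (P : seq {fset U}) (ax : seq U) : Prop :=
  is_axis C ax /\
  forall ax', is_axis C ax' -> total_cost hstar h P ax <= total_cost hstar h P ax'.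

End Axes.

(* Main.v *)
Require Import Defs.
From HB Require Import structures.
From mathcomp Require Import all_boot all_order all_algebra.
From mathcomp Require Import finmap.
From mathcomp Require Import lra zify.
Import Order.TTheory GRing.Theory Num.Theory.
Local Open Scope fset_scope.
Local Open Scope ring_scope.

Lemma index_in_mid (U : choiceType) (l s r : seq U) u :
  uniq (l ++ s ++ r) -> u \in s -> index u (l ++ s ++ r) = (size l + index u s)%N.
Proof.
move=> uq us; rewrite index_cat.
have ul : u \notin l.
  move: uq; rewrite cat_uniq => /and3P[_ /hasPn H _].
  by apply: H; rewrite mem_cat us.
by rewrite (negbTE ul) index_cat us.
Qed.

Lemma interval_cat (U : choiceType) (A : {fset U}) (l s r : seq U) :
  uniq (l ++ s ++ r) -> (forall u, (u \in A) = (u \in s)) -> is_interval A (l ++ s ++ r).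
Proof.
move=> uq hA; apply/forallP => a; apply/forallP => b; apply/allP => c cin.
apply/implyP; rewrite /axlt => /andP[h1 h2].
have as_ : val a \in s by rewrite -hA (valP a).
have bs : val b \in s by rewrite -hA (valP b).
move: h1 h2; rewrite (@index_in_mid _ _ _ _ _ uq as_) (@index_in_mid _ _ _ _ _ uq bs) => h1 h2.
have ib : (index (val b) s < size s)%N by rewrite index_mem.
rewrite hA; move: cin; rewrite !mem_cat => /or3P[cl|cs|cr] //.
- move: h1; rewrite index_cat cl; have := index_mem c l; rewrite cl => H1 H2; exfalso.
  have L : forall i j k : nat, (i < k)%N = true -> (k + j < i)%N -> False by move=> *; lia.
  exact: L H1 H2.
- have cl : c \notin l.
    move: uq; rewrite cat_uniq => /and3P[_ /hasPn H _].
    by apply: H; rewrite mem_cat cr orbT.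
  have cs : c \notin s.
    move: uq; rewrite cat_uniq => /and3P[_ _]; rewrite cat_uniq => /and3P[_ /hasPn H _].
    exact: H.
  move: h2; rewrite index_cat (negbTE cl) index_cat (negbTE cs) => H2; exfalso; exfalso.
  have L : forall i j k t : nat, (j < t)%N -> (k + (t + i) < k + j)%N -> False by move=> *; lia.
  exact: L ib H2.
Qed.

Lemma not_interval (U : choiceType) (A : {fset U}) (ax : seq U) a b c :
  a \in A -> b \in A -> c \notin A -> c \in ax -> axlt ax a c -> axlt ax c b ->
  ~~ is_interval A ax.
Proof.
move=> ha hb hc cax h1 h2; apply/negP => /forallP /(_ (FSetSub ha)) /forallP /(_ (FSetSub hb)).
move=> /allP /(_ c cax) /=; rewrite h1 h2 /=; apply/negP; exact: hc.
Qed.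

Arguments not_interval {U A ax a b c}.

Lemma mid3 (i j k : nat) : i != j -> i != k -> j != k ->
  [|| (i < k < j)%N, (j < k < i)%N, (i < j < k)%N, (k < j < i)%N, (j < i < k)%N | (k < i < j)%N].
Proof. move=> /eqP ? /eqP ? /eqP ?; lia. Qed.

Lemma lb (U : choiceType) (R : realFieldType) (hs h t : R) (B1 B2 B3 : {fset U}) (x y z : U) (ax : seq U) :
 x \in ax -> y \in ax -> z \in ax -> x != y -> x != z -> y != z ->
 x \in B1 -> y \in B1 -> z \notin B1 -> x \in B2 -> z \in B2 -> y \notin B2 ->
 y \in B3 -> z \in B3 -> x \notin B3 -> 0 <= t -> t <= hs -> t <= h ->
 t <= total_cost hs h [:: B1; B2; B3] ax.
Proof.
move=> xa ya za nxy nxz nyz x1 y1 z1 x2 z2 y2 y3 z3 x3 t0 ths th.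
have c0 A : 0 <= cost3 hs h A ax.
  by rewrite /cost3; case: ifP => _ //; case: ifP => _; lra.
have ct A : ~~ is_interval A ax -> t <= cost3 hs h A ax.
  by move=> /negbTE H; rewrite /cost3 H; case: ifP.
have dd (u v : U) : u \in ax -> v \in ax -> u != v -> index u ax != index v ax.
  by move=> ua va; apply: contra => /eqP /(index_inj u ua va) ->.
have key : [|| ~~ is_interval B1 ax, ~~ is_interval B2 ax | ~~ is_interval B3 ax].
  move: (@mid3 _ _ _ (dd _ _ xa ya nxy) (dd _ _ xa za nxz) (dd _ _ ya za nyz)).
  case/orP=> [/andP[p q]|/orP[/andP[p q]|/orP[/andP[p q]|/orP[/andP[p q]|/orP[/andP[p q]|/andP[p q]]]]]].
  - by rewrite (not_interval x1 y1 z1 za p q).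
  - by rewrite (not_interval y1 x1 z1 za p q).
  - by rewrite (not_interval x2 z2 y2 ya p q) orbT.
  - by rewrite (not_interval z2 x2 y2 ya p q) orbT.
  - by rewrite (not_interval y3 z3 x3 xa p q) !orbT.
  - by rewrite (not_interval z3 y3 x3 xa p q) !orbT.
rewrite /total_cost !big_cons big_nil.
have := c0 B1; have := c0 B2; have := c0 B3.
by case/or3P: key => /ct; lra.
Qed.

Lemma arith1 k : (4 <= k)%N -> (1 + (1 + (1 + (k - 3))))%N = k.
Proof. lia. Qed.
Lemma arith2 k : (4 <= k)%N -> (0 < k - 3)%N.
Proof. lia. Qed.

Lemma axlt_split (U : choiceType) (l : seq U) u (m : seq U) v (r : seq U) :
  u \notin l -> v \notin l -> v != u -> v \notin m -> axlt (l ++ u :: m ++ v :: r) u v.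
Proof.
rewrite /axlt => ul vl vu vm.
rewrite index_cat (negbTE ul) index_cat (negbTE vl) ltn_add2l /= eqxx.
by rewrite eq_sym (negbTE vu).
Qed.

Lemma exists_card (U : choiceType) : (forall S : {fset U}, exists x, x \notin S) ->
  forall n, exists W : {fset U}, #|` W| = n.
Proof.
move=> fr; elim=> [|n [W cW]]; first by exists fset0; rewrite cardfs0.
have [x xW] := fr W; exists (x |` W); by rewrite cardfsU1 xW cW.
Qed.

Theorem mainTheorem16 (U : choiceType) (R : realFieldType)
  (f : {fset U} -> seq {fset U} -> seq U -> Prop)
  (hstar h : nat -> R) :
  (forall S : {fset U}, exists x : U, x \notin S) ->
  axis_rule f ->
  resistant_to_cloning f ->
  (forall m : nat, (3 <= m)%N -> 0 < hstar m /\ 0 < h m) ->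
  (forall (m : nat) (C : {fset U}) (P : seq {fset U}), (3 <= m)%N -> #|` C| = m ->
     is_profile C P ->
     forall ax, f C P ax <-> scoring_rule (hstar m) (h m) C P ax) ->
  forall m : nat, (4 <= m)%N -> hstar m <= h m.
Proof.
move=> fresh axr clon hpos hf m m4.
rewrite leNgt; apply/negP => hlt.
have [W cW] := exists_card U fresh (m - 3).
set Ws := enum_fset W.
have memWs u : (u \in Ws) = (u \in W) by [].
have uWs : uniq Ws := fset_uniq W.
have [w wW] : exists w, w \in W.
  have : (0 < #|` W|)%N by rewrite cW arith2.
  by rewrite cardfs_gt0 => /fset0Pn.
have [x xW] := fresh W.
have [y yn] := fresh (x |` W).
have [z zn] := fresh (y |` (x |` W)).
have [a an] := fresh (z |` (y |` (x |` W))).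
move: yn zn an; rewrite !inE !negb_or => /andP[yx yW] /and3P[zy zx zW] /and4P[az ay ax aW].
have wx : w != x by apply/eqP => E; move: xW; rewrite -E wW.
have wy : w != y by apply/eqP => E; move: yW; rewrite -E wW.
have wz : w != z by apply/eqP => E; move: zW; rewrite -E wW.
have wa : w != a by apply/eqP => E; move: aW; rewrite -E wW.
have facts := (negbTE yx, negbTE zy, negbTE zx, negbTE az, negbTE ay, negbTE ax,
  negbTE wx, negbTE wy, negbTE wz, negbTE wa, negbTE xW, negbTE yW, negbTE zW, negbTE aW, wW).
have yx' : x != y by rewrite eq_sym.
have zy' : y != z by rewrite eq_sym.
have zx' : x != z by rewrite eq_sym.
have az' : z != a by rewrite eq_sym.
have ay' : y != a by rewrite eq_sym.
have ax' : x != a by rewrite eq_sym.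
have wx' : x != w by rewrite eq_sym.
have wy' : y != w by rewrite eq_sym.
have wz' : z != w by rewrite eq_sym.
have wa' : a != w by rewrite eq_sym.
have facts2 := (negbTE yx', negbTE zy', negbTE zx', negbTE az', negbTE ay', negbTE ax', negbTE wx', negbTE wy', negbTE wz', negbTE wa').

set C1 := x |` (y |` (z |` W)).
set C := a |` C1.
set B1 := [fset x; y].
set B2 := [fset x; z].
set B3' := y |` (z |` W).
set B3 := a |` B3'.
set P' := [:: B1; B2; B3'].
set P := [:: B1; B2; B3].
have cC1 : #|` C1| = m.
  by rewrite /C1 !cardfsU1 cW !inE !facts !facts2 /= arith1.
have cC : #|` C| = m.+1.
  by rewrite /C cardfsU1 cC1 /C1 !inE !facts.
have prof1 : is_profile C1 P'.
  move=> A; rewrite !inE => /or3P[/eqP->|/eqP->|/eqP->]; apply/andP; split.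
  - by apply/fset0Pn; exists x; rewrite !inE eqxx.
  - by apply/fsubsetP => u; rewrite !inE => /orP[->|->]; rewrite ?orbT.
  - by apply/fset0Pn; exists x; rewrite !inE eqxx.
  - by apply/fsubsetP => u; rewrite !inE => /orP[->|->]; rewrite ?orbT.
  - by apply/fset0Pn; exists y; rewrite !inE eqxx.
  - by apply/fsubsetP => u; rewrite !inE => /or3P[->|->|->]; rewrite ?orbT.
have prof : is_profile C P.
  move=> A; rewrite !inE => /or3P[/eqP->|/eqP->|/eqP->]; apply/andP; split.
  - by apply/fset0Pn; exists x; rewrite !inE eqxx.
  - by apply/fsubsetP => u; rewrite !inE => /orP[->|->]; rewrite ?orbT.
  - by apply/fset0Pn; exists x; rewrite !inE eqxx.
  - by apply/fsubsetP => u; rewrite !inE => /orP[->|->]; rewrite ?orbT.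
  - by apply/fset0Pn; exists y; rewrite !inE eqxx orbT.
  - by apply/fsubsetP => u; rewrite !inE => /or4P[->|->|->|->]; rewrite ?orbT.

have m3 : (3 <= m)%N := ltnW m4.
have wsl s : (last s Ws \in W).
  case E: Ws => [|w0 s0].
    by move: wW; rewrite -memWs E.
  by rewrite -memWs E /= mem_last.
have notf : ~ f C1 P' (y :: Ws ++ [:: z; x]).
  move=> /(hf m C1 P' m3 cC1 prof1) [_ opt].
  have axis0 : is_axis C1 (x :: y :: z :: Ws).
    split; first by rewrite /= !in_cons !memWs !facts !facts2 uWs.
    by move=> u; rewrite !in_cons memWs !inE.
  have := opt _ axis0.
  rewrite /total_cost !big_cons !big_nil /cost3.
  have -> : is_interval B1 (y :: Ws ++ [:: z; x]) = false.
    apply/negbTE; apply: (not_interval (a:=y) (b:=x) (c:=z));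
      rewrite ?inE ?eqxx ?facts ?facts2 ?orbT //.
    - by rewrite ?mem_cat !inE eqxx orbT.
    - by apply: (@axlt_split _ [::] y Ws z [:: x]); rewrite ?inE ?memWs ?facts ?facts2.
    - by apply: (@axlt_split _ (y :: Ws) z [::] x [::]); rewrite ?inE ?memWs ?facts ?facts2.
  have -> : is_interval B2 (y :: Ws ++ [:: z; x]).
    apply: (@interval_cat _ B2 (y :: Ws) [:: z; x] [::]).
      by rewrite cat_uniq /= !inE ?mem_cat ?inE !memWs !facts !facts2 uWs.
    by move=> u; rewrite !inE orbC.
  have -> : is_interval B3' (y :: Ws ++ [:: z; x]).
    have -> : y :: Ws ++ [:: z; x] = [::] ++ (y :: Ws ++ [:: z]) ++ [:: x] by rewrite /= -catA.
    apply: (@interval_cat _ B3' [::] (y :: Ws ++ [:: z]) [:: x]).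
      by rewrite /= -catA cat_uniq /= ?(in_cons, mem_cat, memWs, facts, facts2, uWs, in_nil).
    by move=> u; rewrite !inE mem_cat memWs !inE; case: (u == y) (u == z) (u \in W) => [] [] [].
  have -> : has_both_ends B1 (y :: Ws ++ [:: z; x]).
    by rewrite /has_both_ends last_cat /= !inE !eqxx orbT.
  have -> : is_interval B1 (x :: y :: z :: Ws).
    apply: (@interval_cat _ B1 [::] [:: x; y] (z :: Ws)).
      by rewrite /= !in_cons !memWs !facts !facts2 uWs.
    by move=> u; rewrite !inE.
  have -> : is_interval B2 (x :: y :: z :: Ws) = false.
    apply/negbTE; apply: (not_interval (a:=x) (b:=z) (c:=y));
      rewrite ?inE ?eqxx ?facts ?facts2 ?orbT //.
    - by apply: (@axlt_split _ [::] x [::] y (z :: Ws)); rewrite ?inE ?memWs ?facts ?facts2.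
    - by apply: (@axlt_split _ [:: x] y [::] z Ws); rewrite ?inE ?memWs ?facts ?facts2.
  have -> : has_both_ends B2 (x :: y :: z :: Ws) = false.
    rewrite /has_both_ends /=; apply/negbTE; rewrite negb_and; apply/orP; right.
    have := wsl z; move: (last z Ws) => l lW; rewrite !inE; apply/negP => /orP[/eqP E|/eqP E].
      by move: xW; rewrite -E lW.
    by move: zW; rewrite -E lW.
  have -> : is_interval B3' (x :: y :: z :: Ws).
    have -> : x :: y :: z :: Ws = [:: x] ++ (y :: z :: Ws) ++ [::] by rewrite cats0.
    apply: (@interval_cat _ B3' [:: x] (y :: z :: Ws) [::]).
      by rewrite /= cats0 !in_cons !memWs !facts !facts2 uWs.
    by move=> u; rewrite !inE memWs.
  by rewrite !addr0 ?add0r leNgt hlt.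

have ne1 : B1 != fset0 by apply/fset0Pn; exists x; rewrite !inE eqxx.
have ne2 : B2 != fset0 by apply/fset0Pn; exists x; rewrite !inE eqxx.
have ne3 : B3' != fset0 by apply/fset0Pn; exists y; rewrite !inE eqxx.
have e1 : B1 `\ a = B1 by apply: mem_fsetD1; rewrite !inE !facts.
have e2 : B2 `\ a = B2 by apply: mem_fsetD1; rewrite !inE !facts.
have e3 : B3 `\ a = B3' by apply: fsetU1K; rewrite !inE !facts.
have rem : prof_remove P a = P' by rewrite /prof_remove /= e1 e2 e3 ne1 ne2 ne3.
have CD : C `\ a = C1 by apply: fsetU1K; rewrite !inE !facts.
have aC : a \in C by rewrite !inE eqxx.
have wC : w \in C by rewrite !inE wW !orbT.
have cl : clones P a w.
  move=> A; rewrite !inE => /or3P[/eqP->|/eqP->|/eqP->];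
  by rewrite !inE ?eqxx ?facts ?facts2 ?wW ?orbT.
have [cl1 _] := clon C P a w prof aC wC wa' cl.
rewrite CD rem in cl1.
suff [ax0 fax0 rax0] : exists2 ax0, f C P ax0 & ax_remove ax0 a = y :: Ws ++ [:: z; x].
  by apply: notf; rewrite -rax0; apply: cl1.
have fW : filter (predC1 a) Ws = Ws.
  by apply/all_filterP/allP => u; rewrite memWs => uW; apply/eqP => E; move: aW; rewrite -E uW.
have m3' : (3 <= m.+1)%N := leqW m3.
have LB t bx : is_axis C bx -> 0 <= t -> t <= hstar m.+1 -> t <= h m.+1 ->
    t <= total_cost (hstar m.+1) (h m.+1) P bx.
  move=> [_ hax'] t0 t1 t2; apply: (@lb _ _ _ _ _ B1 B2 B3 x y z);
  by rewrite ?hax' ?inE ?eqxx ?facts ?facts2 ?orbT.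
case: (leP (hstar m.+1) (h m.+1)) => hc.
- exists (y :: Ws ++ [:: a; z; x]); last first.
    by rewrite /ax_remove /= filter_cat fW /= eqxx ?facts ?facts2.
  apply/(hf m.+1 C P m3' cC prof); split.
    split.
      by rewrite /= cat_uniq /= ?(in_cons, mem_cat, memWs, facts, facts2, uWs, in_nil).
    move=> u; rewrite in_cons mem_cat memWs !inE.
    by case: (u == a) (u == x) (u == y) (u == z) (u \in W) => [] [] [] [] [].
  move=> bx hbx.
  suff -> : total_cost (hstar m.+1) (h m.+1) P (y :: Ws ++ [:: a; z; x]) = hstar m.+1.
    apply: (LB _ _ hbx) => //; by apply: ltW; case: (hpos m.+1 m3').
  rewrite /total_cost !big_cons !big_nil /cost3.
  have -> : is_interval B1 (y :: Ws ++ [:: a; z; x]) = false.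
    apply/negbTE; apply: (not_interval (a:=y) (b:=x) (c:=a));
      rewrite ?inE ?eqxx ?facts ?facts2 ?orbT //.
    - by rewrite ?mem_cat !inE eqxx orbT.
    - by apply: (@axlt_split _ [::] y Ws a [:: z; x]); rewrite ?inE ?memWs ?facts ?facts2.
    - by apply: (@axlt_split _ (y :: Ws) a [:: z] x [::]); rewrite ?inE ?memWs ?facts ?facts2.
  have -> : has_both_ends B1 (y :: Ws ++ [:: a; z; x]).
    by rewrite /has_both_ends last_cat /= !inE !eqxx orbT.
  have -> : is_interval B2 (y :: Ws ++ [:: a; z; x]).
    have -> : y :: Ws ++ [:: a; z; x] = (y :: Ws ++ [:: a]) ++ [:: z; x] ++ [::] by rewrite /= -catA.
    apply: (@interval_cat _ B2 (y :: Ws ++ [:: a]) [:: z; x] [::]).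
      by rewrite /= -catA /= cat_uniq /= ?(in_cons, mem_cat, memWs, facts, facts2, uWs, in_nil).
    by move=> u; rewrite !inE orbC.
  have -> : is_interval B3 (y :: Ws ++ [:: a; z; x]).
    have -> : y :: Ws ++ [:: a; z; x] = [::] ++ (y :: Ws ++ [:: a; z]) ++ [:: x] by rewrite /= -catA.
    apply: (@interval_cat _ B3 [::] (y :: Ws ++ [:: a; z]) [:: x]).
      by rewrite /= -catA cat_uniq /= ?(in_cons, mem_cat, memWs, facts, facts2, uWs, in_nil).
    move=> u; rewrite !inE mem_cat memWs !inE.
    by case: (u == a) (u == y) (u == z) (u \in W) => [] [] [] [].
  by rewrite !addr0 ?add0r.
- exists (a :: y :: Ws ++ [:: z; x]); last first.
    by rewrite /ax_remove /= eqxx filter_cat fW /= ?facts ?facts2.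
  apply/(hf m.+1 C P m3' cC prof); split.
    split.
      by rewrite /= cat_uniq /= ?(in_cons, mem_cat, memWs, facts, facts2, uWs, in_nil).
    move=> u; rewrite !in_cons mem_cat memWs !inE.
    by case: (u == a) (u == x) (u == y) (u == z) (u \in W) => [] [] [] [] [].
  move=> bx hbx.
  suff -> : total_cost (hstar m.+1) (h m.+1) P (a :: y :: Ws ++ [:: z; x]) = h m.+1.
    apply: (LB _ _ hbx) => //; first by apply: ltW; case: (hpos m.+1 m3').
    exact: ltW.
  rewrite /total_cost !big_cons !big_nil /cost3.
  have -> : is_interval B1 (a :: y :: Ws ++ [:: z; x]) = false.
    apply/negbTE; apply: (not_interval (a:=y) (b:=x) (c:=z));
      rewrite ?inE ?eqxx ?facts ?facts2 ?orbT //.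
    - by rewrite ?mem_cat !inE eqxx !orbT.
    - by apply: (@axlt_split _ [:: a] y Ws z [:: x]); rewrite ?inE ?memWs ?facts ?facts2.
    - by apply: (@axlt_split _ (a :: y :: Ws) z [::] x [::]); rewrite ?inE ?memWs ?facts ?facts2.
  have -> : has_both_ends B1 (a :: y :: Ws ++ [:: z; x]) = false.
    by rewrite /has_both_ends !inE !facts.
  have -> : is_interval B2 (a :: y :: Ws ++ [:: z; x]).
    apply: (@interval_cat _ B2 (a :: y :: Ws) [:: z; x] [::]).
      by rewrite cat_uniq /= ?(in_cons, mem_cat, memWs, facts, facts2, uWs, in_nil).
    by move=> u; rewrite !inE orbC.
  have -> : is_interval B3 (a :: y :: Ws ++ [:: z; x]).
    have -> : a :: y :: Ws ++ [:: z; x] = [::] ++ (a :: y :: Ws ++ [:: z]) ++ [:: x] by rewrite /= -catA.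
    apply: (@interval_cat _ B3 [::] (a :: y :: Ws ++ [:: z]) [:: x]).
      by rewrite /= -catA cat_uniq /= ?(in_cons, mem_cat, memWs, facts, facts2, uWs, in_nil).
    move=> u; rewrite !inE mem_cat memWs !inE.
    by case: (u == a) (u == y) (u == z) (u \in W) => [] [] [] [].
  by rewrite !addr0 ?add0r.
Qed.
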